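(* Let $K$ be a compact Hausdorff space and $\phi:K\to K$ a continuous map. Suppose there is an uncountable subset $A\subset K$ such that $\phi|_A$ is injective and $\phi(A)\cap A=\emptyset$. Then the composition operator $T=C_\phi:C(K)\to C(K)$, $f\mapsto f\circ\phi$, has the property that for every $g\in\mathfrak B(K)$, the operator $T^*+M_g^*:C(K)^*\to C(K)^*$ does not have separable range.
   Context: $C(K)$ is the Banach space of continuous real-valued functions on $K$ with the sup norm, and $C(K)^*$ is identified with the space of finite regular signed Borel measures on $K$. $\mathfrak B(K)$ denotes the space of bounded real-valued Borel functions on $K$. For $g\in\mathfrak B(K)$, $M_g^*:C(K)^*\to C(K)^*$ is the operator sending a measure $\mu$ to the measure $g\,\mathrm d\mu$. $T^*$ denotes the Banach space adjoint of $T$. *)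

(* Defs.v *)
From HB Require Import structures.
From mathcomp Require Import all_boot all_order all_algebra.
From mathcomp Require Import all_classical all_reals all_analysis.
Set Implicit Arguments. Unset Strict Implicit. Unset Printing Implicit Defensive.
Import Order.TTheory GRing.Theory Num.Theory.
Import numFieldNormedType.Exports.
Local Open Scope classical_set_scope.
Local Open Scope ring_scope.

Definition Borel (K : ptopologicalType) := g_sigma_algebraType (@open K).

Section defs.
Context (R : realType) (K : ptopologicalType).
Local Notation BK := (Borel K).

Definition regular_measure (mu : {finite_measure set BK -> \bar R}) : Prop :=
  forall E : set BK, measurable E ->
    (forall e : R, 0 < e -> exists U : set K,
        open U /\ E `<=` U /\ (mu U <= mu E + e%:E)%E) /\
    (forall e : R, 0 < e -> exists C : set K,
        compact C /\ C `<=` E /\ (mu E <= mu C + e%:E)%E).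

(* An element of C(K)^*, i.e. a finite regular signed Borel measure, is
   represented as a difference mu.1 - mu.2 of two finite regular positive
   Borel measures (Jordan decomposition; every such difference is a regular
   signed measure and every regular signed measure is such a difference). *)
Definition smeas := ({finite_measure set BK -> \bar R} *
                     {finite_measure set BK -> \bar R})%type.

Definition regular_smeas (mu : smeas) : Prop :=
  regular_measure mu.1 /\ regular_measure mu.2.

Definition sm_set (mu : smeas) (A : set BK) : R :=
  fine (mu.1 A) - fine (mu.2 A).

Definition sm_int (mu : smeas) (A : set BK) (f : BK -> R) : R :=
  Rintegral mu.1 A f - Rintegral mu.2 A f.

Definition mul_sm (g : BK -> R) (mu : smeas) (A : set BK) : R :=
  sm_int mu A g.

Definition bounded_borel (g : BK -> R) : Prop :=
  measurable_fun [set: BK] g /\ exists M : R, forall x, `|g x| <= M.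

Definition borel_partition (Es : seq (set BK)) : Prop :=
  (forall E, E \in Es -> measurable E) /\
  (forall i j, (i < size Es)%N -> (j < size Es)%N -> i <> j ->
     nth set0 Es i `&` nth set0 Es j = set0) /\
  (forall x : BK, exists2 E, E \in Es & E x).

Definition tv_le (s : set BK -> R) (e : R) : Prop :=
  forall Es, borel_partition Es -> \sum_(E <- Es) `|s E| <= e.

(* nu = T^* mu for the composition operator T = C_phi, i.e.
   (T^* mu)(f) = mu(f o phi) for every f in C(K), under the Riesz
   identification of C(K)^* with regular signed measures *)
Definition is_comp_adjoint (phi : K -> K) (mu nu : smeas) : Prop :=
  forall f : K -> R, continuous f ->
    sm_int nu [set: BK] f = sm_int mu [set: BK] (f \o phi).

Definition in_range_adj (phi : K -> K) (g : BK -> R) (nu : set BK -> R) : Prop :=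
  exists mu rho : smeas, [/\ regular_smeas mu, regular_smeas rho,
    is_comp_adjoint phi mu rho &
    forall A : set BK, measurable A -> nu A = sm_set rho A + mul_sm g mu A].

Definition separable_range (phi : K -> K) (g : BK -> R) : Prop :=
  exists nus : nat -> (set BK -> R),
    (forall n, in_range_adj phi g (nus n)) /\
    forall nu, in_range_adj phi g nu ->
      forall e : R, 0 < e -> exists n, tv_le (fun A => nu A - nus n A) e.

End defs.

(* Main.v *)
Require Import Defs.
From HB Require Import structures.
From mathcomp Require Import all_boot all_order all_algebra.
From mathcomp Require Import all_classical all_reals all_analysis.
From mathcomp Require Import measurable_realfun.
From mathcomp Require Import lra.
Import Order.TTheory GRing.Theory Num.Theory.
Import numFieldNormedType.Exports.
Local Open Scope classical_set_scope.
Local Open Scope ring_scope.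

Section helpers.
Variables (R : realType) (K : ptopologicalType).

Lemma borel_open (U : set K) : open U -> measurable (U : set (Borel K)).
Proof. by move=> oU; apply: sub_sigma_algebra. Qed.

Lemma borel_closed (U : set K) : closed U -> measurable (U : set (Borel K)).
Proof.
move=> cU; rewrite -(setCK U); apply: measurableC; apply: borel_open.
exact: closed_openC.
Qed.

Lemma cont_meas (f : K -> R) : continuous f ->
  measurable_fun [set: Borel K] (f : Borel K -> R).
Proof.
move=> /continuousP cf; apply: (measurability _ (RGenOpens.measurableE R)).
move=> _ [_ [a [b ->] <-]]; rewrite setTI; apply: borel_open.
exact/cf/interval_open.
Qed.

Lemma Rint_dirac (a : Borel K) (D : set (Borel K)) (f : Borel K -> R) :
  measurable D -> measurable_fun D f ->
  Rintegral (\d_a : {finite_measure set (Borel K) -> \bar R}) D f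
   = (a \in D)%:R * f a.
Proof.
move=> mD mf; rewrite /Rintegral integral_dirac //.
exact/measurable_EFinP.
Qed.

Lemma Rint_zero (D : set (Borel K)) (f : Borel K -> R) :
  Rintegral (mzero : {finite_measure set (Borel K) -> \bar R}) D f = 0.
Proof. by rewrite /Rintegral integral_measure_zero. Qed.

Lemma regular_zero : regular_measure (mzero : {finite_measure set (Borel K) -> \bar R}).
Proof.
move=> E mE; split => e e0.
  exists setT; split; [exact: openT|split=> //].
  by rewrite /= add0e lee_fin ltW.
exists set0; split; [exact: compact0|split=> //].
by rewrite /= add0e lee_fin ltW.
Qed.

Lemma dE (a : Borel K) (U : set (Borel K)) :
  (\d_a : {finite_measure set (Borel K) -> \bar R}) U = ((a \in U)%:R)%:E.
Proof. exact: diracE. Qed.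

Lemma regular_dirac (a : Borel K) : hausdorff_space K ->
  regular_measure (\d_a : {finite_measure set (Borel K) -> \bar R}).
Proof.
move=> hK E mE; have [aE|aE] := boolP (a \in E); split => e e0.
- exists setT; split; [exact: openT|split=> //].
  by rewrite !dE aE in_setT lee_fin lerDl ltW.
- exists [set a]; split; [exact: compact_set1|split].
    by move=> x ->; apply/set_mem.
  by rewrite !dE aE mem_set // lee_fin lerDl ltW.
- exists (~` [set (a : K)]); split.
    apply: closed_openC; exact/accessible_closed_set1/hausdorff_accessible.
  split.
    by move=> x Ex xa; move: aE; rewrite -xa (mem_set Ex).
  rewrite !dE (negbTE aE) memNset; last by move=> /(_ erefl).
  by rewrite /= -EFinD lee_fin add0r ltW.
- exists set0; split; [exact: compact0|split=> //].
  by rewrite !dE (negbTE aE) in_set0 /= -EFinD lee_fin add0r ltW.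
Qed.

End helpers.

Theorem lemma4 (R : realType) (K : ptopologicalType) (phi : K -> K)
  (A : set K) :
  compact [set: K] -> hausdorff_space K -> continuous phi ->
  ~ countable A -> {in A &, injective phi} -> phi @` A `&` A = set0 ->
  forall g : Borel K -> R, bounded_borel g -> ~ separable_range phi g.
Proof.
move=> _ hK cphi Aunc injA disj g [mg [M gM]] [nus [Hrange Happrox]].
pose mu (x : K) : smeas R K :=
  ((\d_(x : Borel K) : {finite_measure set (Borel K) -> \bar R}),
   (mzero : {finite_measure set (Borel K) -> \bar R})).
pose nu x := fun S => sm_set (mu (phi x)) S + mul_sm g (mu x) S.
have cl1 : forall y : K, closed [set y].
  exact/accessible_closed_set1/hausdorff_accessible.
have Hin : forall x, in_range_adj phi g (nu x).
  move=> x; exists (mu x), (mu (phi x)); split => //.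
  - by split; [exact: regular_dirac|exact: regular_zero].
  - by split; [exact: regular_dirac|exact: regular_zero].
  move=> f cf; rewrite /sm_int /= !Rint_zero !Rint_dirac //.
  - apply: cont_meas => y; apply: continuous_comp; [exact: cphi|exact: cf].
  - exact: cont_meas.
have nuval : forall x (S : set (Borel K)), measurable S ->
    nu x S = (phi x \in S)%:R + (x \in S)%:R * g x.
  move=> x S mS; rewrite /nu /sm_set /mul_sm /sm_int /= indicE Rint_zero Rint_dirac //.
    by rewrite /= subr0 subr0.
  exact: (measurable_funS _ _ mg).
have notinA : forall x, A x -> ~ A (phi x).
  move=> x Ax Apx; have : (phi @` A `&` A) (phi x) by split => //; exists x.
  by rewrite disj.
have [n Hn] : {n : K -> nat & forall x, A x ->
    tv_le (fun S => nu x S - nus (n x) S) (1/3)}.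
  apply: (@choice K nat (fun x m => A x -> tv_le (fun S => nu x S - nus m S) (1/3))) => x; have [Ax|nAx] := pselect (A x); last by exists 0%N.
  have [m Hm] := Happrox _ (Hin x) (1/3) ltac:(lra).
  by exists m.
apply: Aunc; apply/countable_injP; exists n => a b /set_mem Aa /set_mem Ab nab.
apply: contrapT => neqab.
pose S1 : set (Borel K) := [set phi a].
have mS1 : measurable S1 by apply: borel_closed; exact: cl1.
have part : borel_partition [:: S1; ~` S1].
  split; [|split].
  - move=> E; rewrite !in_cons in_nil orbF => /orP [/eqP->|/eqP->]; first exact: mS1.
    exact: measurableC.
  - move=> [|[|i]] [|[|j]] //= hi hj hij.
    + exact: setICr.
    + by rewrite setIC setICr.
  - move=> x; have [x1|x1] := pselect (S1 x).
      by exists S1 => //; rewrite !in_cons eqxx.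
    by exists (~` S1) => //; rewrite !in_cons eqxx orbT.
have ha := Hn a Aa _ part; have hb := Hn b Ab _ part.
rewrite !big_cons big_nil nab in ha.
rewrite !big_cons big_nil in hb.
have v1 : nu a S1 = 1.
  rewrite nuval // mem_set // memNset ?mul0r ?addr0 //.
  by move=> /= e; apply: (notinA a Aa); rewrite -e.
have v2 : nu b S1 = 0.
  rewrite nuval // memNset; last first.
    by move=> /= e; apply: neqab; apply: injA => //; rewrite inE.
  rewrite memNset ?mul0r ?addr0 //.
  by move=> /= e; apply: (notinA a Aa); rewrite -e.
rewrite v1 in ha; rewrite v2 in hb.
set u := nus (n b) S1 in ha hb.
have e1 : (1 - u) - (0 - u) = 1 by rewrite sub0r opprK subrK.
have := ler_normB (1 - u) (0 - u); rewrite e1 normr1 => key.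
have p1 := normr_ge0 (nu a (~` S1) - nus (n b) (~` S1)).
have p2 := normr_ge0 (nu b (~` S1) - nus (n b) (~` S1)).
move: ha hb key p1 p2.
move: (`|1 - u|) (`|0 - u|) (`|nu a (~` S1) - nus (n b) (~` S1)|)
  (`|nu b (~` S1) - nus (n b) (~` S1)|) => x1 x2 x3 x4.
clear; move=> *; lra.
Qed.
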